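(* Let $0<p<1$ and let $G$ be a connected simple graph with $n$ vertices and $m$ edges. Then $$\min\left\{\mathcal{E}_p^+(G), \mathcal{E}_p^-(G)\right\} \geq (n-1)^{p/2}.$$
   Context: For a graph $G$ with adjacency eigenvalues $\lambda_1\ge\cdots\ge\lambda_n$ (with multiplicity), $\mathcal{E}_p^+(G) = \sum_{\lambda_i>0}\lambda_i^p$ and $\mathcal{E}_p^-(G) = \sum_{\lambda_i<0}|\lambda_i|^p$. *)

(* Defs.v *)
From HB Require Import structures.
From mathcomp Require Import all_boot all_order all_algebra.
From mathcomp Require Import reals exp.
Set Implicit Arguments. Unset Strict Implicit. Unset Printing Implicit Defensive.
Import Order.TTheory GRing.Theory Num.Theory.
Local Open Scope ring_scope.

(* A simple graph on the vertex set 'I_n is a relation e : rel 'I_n that is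
   symmetric and irreflexive. Its adjacency matrix: *)
Definition adjmx (R : realType) (n : nat) (e : rel 'I_n) : 'M[R]_n :=
  \matrix_(i, j) (e i j)%:R.

Definition connected_graph (n : nat) (e : rel 'I_n) : Prop :=
  forall x y : 'I_n, connect e x y.

(* Given the list s of eigenvalues (with multiplicity):
   E_p^+ = sum of lambda^p over positive lambda,
   E_p^- = sum of |lambda|^p over negative lambda. *)
Definition Epos (R : realType) (s : seq R) (p : R) : R :=
  \sum_(x <- s | 0 < x) x `^ p.
Definition Eneg (R : realType) (s : seq R) (p : R) : R :=
  \sum_(x <- s | x < 0) `|x| `^ p.

(* Main.v *)
Require Import Defs.
From HB Require Import structures.
From mathcomp Require Import all_boot all_order all_algebra.
From mathcomp Require Import reals exp.
From mathcomp Require Import ring lra zify.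
Import Order.TTheory GRing.Theory Num.Theory.

Definition Pk n (e : rel 'I_n) (r x : 'I_n) (k : nat) : bool :=
  [exists t : k.-tuple 'I_n, path e x t && (last x t == r)].

Arguments Pk {n}.

Lemma edges_bound n (e : rel 'I_n) (r : 'I_n) : symmetric e ->
  (forall x y, connect e x y) ->
  (2 * (n - 1) <= #|[set ij : 'I_n * 'I_n | e ij.1 ij.2]|)%N.
Proof.
move=> esym conn.
have ex : forall x, exists k, Pk e r x k.
  move=> x; have /connectP [p pp lp] := conn x r.
  exists (size p); apply/existsP; exists (in_tuple p) => /=.
  by rewrite pp -lp eqxx.
pose d x := ex_minn (ex x).
have dP : forall x, Pk e r x (d x) by move=> x; rewrite /d; case: ex_minnP.
have dmin : forall x k, Pk e r x k -> (d x <= k)%N.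
  by move=> x k; rewrite /d; case: ex_minnP => m _ H /H.
have step : forall x, x != r -> exists y, e x y && (d y < d x)%N.
  move=> x xr; have /existsP [t /andP [pt lt]] := dP x.
  case: t pt lt => [[|y t'] st] //=; first by move=> _ /eqP E; rewrite E eqxx in xr.
  move=> /andP [exy pt'] lt; exists y; rewrite exy /=.
  have : Pk e r y (size t').
    by apply/existsP; exists (in_tuple t') => /=; rewrite pt' lt.
  move=> /dmin; move: st => /= /eqP st; lia.
pose par x := odflt x [pick y | e x y && (d y < d x)%N].
have parP : forall x, x != r -> e x (par x) && (d (par x) < d x)%N.
  move=> x xr; rewrite /par; case: pickP => //= H; exfalso.
  by have [y Hy] := step x xr; rewrite H in Hy.
pose X := [set~ r].
pose A := [set (x, par x) | x in X].
pose B := [set (par x, x) | x in X].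
have cA : #|A| = #|X|.
  by apply: card_in_imset => x y _ _ [].
have cB : #|B| = #|X|.
  by apply: card_in_imset => x y _ _ [].
have cX : #|X| = (n - 1)%N by rewrite cardsC1 card_ord; lia.
have AB0 : A :&: B = set0.
  apply/setP => [[a b]]; rewrite !inE.
  apply/negP => /andP [/imsetP [x xX [-> ->]] /imsetP [y yX [E1 E2]]].
  move: xX yX; rewrite !inE => xX yX.
  have := parP x xX; have := parP y yX; rewrite -E1 -E2 => /andP [_ h1] /andP [_ h2].
  lia.
have sub : A :|: B \subset [set ij : 'I_n * 'I_n | e ij.1 ij.2].
  apply/subsetP => [[a b]]; rewrite !inE => /orP [] /imsetP [x xX [-> ->]] /=;
  move: xX; rewrite !inE => xX; have /andP [h _] := parP x xX => //.
  by rewrite esym.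
have := subset_leq_card sub; rewrite cardsU AB0 cards0 cA cB cX; lia.
Qed.

Local Open Scope ring_scope.

Lemma comp_inj (R : idomainType) (q p r : {poly R}) : (1 < size q)%N ->
  p \Po q = r \Po q -> p = r.
Proof.
move=> Hq E; apply/eqP; rewrite -subr_eq0 -(comp_poly_eq0 _ Hq) comp_polyB E.
by rewrite subrr.
Qed.

Lemma prodN_seq (R : comNzRingType) (I : Type) (s : seq I) (F : I -> R) :
  \prod_(x <- s) (- F x) = (-1) ^+ size s * \prod_(x <- s) F x.
Proof.
elim: s => [|a s IH]; first by rewrite !big_nil expr0 mul1r.
by rewrite !big_cons IH /= exprS; ring.
Qed.

Lemma char_poly_sq (R : idomainType) n (A : 'M[R]_n) (s : seq R) :
  char_poly A = \prod_(x <- s) ('X - x%:P) ->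
  char_poly (A *m A) = \prod_(x <- s) ('X - (x ^+ 2)%:P).
Proof.
move=> HA.
have ss : size s = n.
  have := size_char_poly A; rewrite HA size_prod_XsubC; by case.
have Hq : (1 < size ('X^2 : {poly R}))%N by rewrite size_polyXn.
apply: (@comp_inj R _ _ _ Hq).
set B := map_mx (@polyC R) A.
have E1 : map_mx (comp_poly 'X^2) (char_poly_mx (A *m A))
          = ('X%:M - B) *m ('X%:M + B).
  rewrite mulmxDr !mulmxBl -scalar_mxM mul_mx_scalar mul_scalar_mx.
  rewrite -map_mxM /B addrA subrK.
  apply/matrixP => i j; rewrite !mxE.
  by rewrite comp_polyB comp_polyC raddfMn /= comp_polyX.
have E2 : map_mx (comp_poly (- 'X)) (char_poly_mx A) = - ('X%:M + B).
  apply/matrixP => i j; rewrite !mxE.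
  rewrite comp_polyB comp_polyC raddfMn /= comp_polyX opprD mulNrn.
  by [].
have E3 : \det ('X%:M + B) = \prod_(x <- s) ('X + x%:P).
  have := det_map_mx (comp_poly (- 'X)) (char_poly_mx A).
  rewrite E2 -/(char_poly A) HA rmorph_prod /=.
  rewrite -scaleN1r detZ.
  under eq_bigr do rewrite comp_polyB comp_polyX comp_polyC -opprD.
  rewrite (@prodN_seq _ _ s (fun x => 'X + x%:P)) ss => /(congr1 (fun p => (-1) ^+ n * p)).
  by rewrite !mulrA -!exprMn mulrNN mulr1 expr1n !mul1r => ->.
rewrite /char_poly -det_map_mx E1 det_mulmx E3 -/(char_poly_mx A) -/(char_poly A) HA.
rewrite -big_split rmorph_prod /=; apply: eq_bigr => x _.
rewrite comp_polyB comp_polyC comp_polyX rmorphXn /=; ring.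
Qed.

Lemma sum_tr (R : idomainType) n (A : 'M[R]_n) (s : seq R) :
  char_poly A = \prod_(x <- s) ('X - x%:P) -> \sum_(x <- s) x = \tr A.
Proof.
move=> HA.
have ss : size s = n.
  have := size_char_poly A; rewrite HA size_prod_XsubC; by case.
case: n A HA ss => [|n] A HA ss.
  by case: s HA ss => // _ _; rewrite big_nil /mxtrace big_ord0.
apply: oppr_inj; rewrite -char_poly_trace // HA -coefPn_prod_XsubC ?ss //.
Qed.

Lemma sumsq_tr (R : idomainType) n (A : 'M[R]_n) (s : seq R) :
  char_poly A = \prod_(x <- s) ('X - x%:P) -> \sum_(x <- s) x ^+ 2 = \tr (A *m A).
Proof.
move=> /char_poly_sq HA; rewrite -(@sum_tr _ _ _ (map (fun x => x ^+ 2) s)).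
  by rewrite big_map.
by rewrite HA big_map.
Qed.

Lemma subadd_powR (R : realType) (p a b : R) : 0 < p -> p <= 1 ->
  0 <= a -> 0 <= b -> (a + b) `^ p <= a `^ p + b `^ p.
Proof.
move=> p0 p1 a0 b0.
have pn0 : p != 0 by rewrite gt_eqF.
case: (eqVneq a 0) => [->|an0]; first by rewrite add0r powR0 // add0r.
case: (eqVneq b 0) => [->|bn0]; first by rewrite addr0 powR0 // addr0.
have ap : 0 < a by rewrite lt_def an0 a0.
have bp : 0 < b by rewrite lt_def bn0 b0.
set c := a + b.
have cp : 0 < c by rewrite /c; lra.
have key : forall u, 0 < u -> u <= c -> u / c * c `^ p <= u `^ p.
  move=> u u0 uc.
  have {2}-> : u = u / c * c by rewrite mulfVK // gt_eqF.
  rewrite powRM; last 2 first.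
  - by rewrite divr_ge0 // ltW.
  - exact: ltW.
  rewrite ler_wpM2r ?powR_ge0 // ger1_powR //.
  by rewrite divr_gt0 //= ler_pdivrMr // mul1r.
have ka := key a ap ltac:(rewrite /c; lra).
have kb := key b bp ltac:(rewrite /c; lra).
have -> : c `^ p = a / c * c `^ p + b / c * c `^ p.
  by rewrite -mulrDl -mulrDl divff ?mul1r // gt_eqF.
exact: lerD.
Qed.

Lemma sum_powR (R : realType) (s : seq R) (P : pred R) (F : R -> R) (p : R) :
  0 < p -> p <= 1 -> (forall x, P x -> 0 <= F x) ->
  (\sum_(x <- s | P x) F x) `^ p <= \sum_(x <- s | P x) F x `^ p.
Proof.
move=> p0 p1 HF; elim: s => [|a s IH].
  by rewrite !big_nil powR0 // gt_eqF.
rewrite !big_cons; case: ifP => // Pa.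
have h : 0 <= \sum_(x <- s | P x) F x by apply: sumr_ge0.
exact: (le_trans (@subadd_powR _ _ _ _ p0 p1 (HF a Pa) h) (lerD (lexx _) IH)).
Qed.

Lemma sumsq_le (R : realType) (s : seq R) (P : pred R) (F : R -> R) :
  (forall x, P x -> 0 <= F x) ->
  \sum_(x <- s | P x) F x ^+ 2 <= (\sum_(x <- s | P x) F x) ^+ 2.
Proof.
move=> HF; elim: s => [|a s IH]; first by rewrite !big_nil expr0n.
rewrite !big_cons; case: ifP => // Pa.
have h1 := HF a Pa.
have h2 : 0 <= \sum_(x <- s | P x) F x by apply: sumr_ge0.
move: IH; set S := \sum_(x <- s | P x) F x; set T := \sum_(x <- s | P x) F x ^+ 2.
move=> IH; rewrite sqrrD.
have h3 : 0 <= F a * S by rewrite mulr_ge0.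
rewrite mulr2n; lra.
Qed.

Lemma split_sum (R : realType) (s : seq R) (F : R -> R) : F 0 = 0 ->
  \sum_(x <- s) F x = \sum_(x <- s | 0 < x) F x + \sum_(x <- s | x < 0) F x.
Proof.
move=> F0; elim: s => [|a s IH]; first by rewrite !big_nil addr0.
rewrite !big_cons IH; case: (ltrgt0P a) => [ap|an|->].
- by rewrite addrA.
- by rewrite addrCA.
- by rewrite F0 add0r.
Qed.

Lemma final_step (R : realType) (p N S E : R) : 0 < p ->
  0 <= N -> N <= S ^+ 2 -> 0 <= S -> S `^ p <= E -> N `^ (p / 2) <= E.
Proof.
move=> p0 N0 NS S0 SE; apply: le_trans SE.
have p2 : 0 <= p / 2 by rewrite divr_ge0 // ltW.
apply: le_trans (ge0_ler_powR p2 _ _ NS) _; rewrite ?nnegrE ?sqr_ge0 //.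
rewrite -powR_mulrn // -powRrM mulrC divfK //; lra.
Qed.

Theorem theorem5p7 (R : realType) (n : nat) (e : rel 'I_n) (p : R) :
  0 < p -> p < 1 ->
  symmetric e -> irreflexive e -> connected_graph e ->
  forall s : seq R,
    char_poly (adjmx R e) = \prod_(x <- s) ('X - x%:P) ->
    ((n - 1)%N%:R) `^ (p / 2) <= Num.min (Epos s p) (Eneg s p).
Proof.
move=> p0 p1 esym eirr conn s HA.
set Ad := adjmx R e in HA.
have h1 : \sum_(x <- s) x = 0.
  rewrite (@sum_tr _ _ _ _ HA) /mxtrace; apply: big1 => i _.
  by rewrite /Ad /adjmx mxE eirr.
have h2 : ((2 * (n - 1))%N%:R : R) <= \sum_(x <- s) x ^+ 2.
  rewrite (@sumsq_tr _ _ _ _ HA) /mxtrace.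
  have -> : \sum_i (Ad *m Ad) i i = ((\sum_i \sum_j (e i j : nat))%N)%:R.
    rewrite natr_sum; apply: eq_bigr => i _; rewrite natr_sum mxE.
    apply: eq_bigr => j _.
    rewrite /Ad /adjmx !mxE (esym j i).
    by case: (e i j); rewrite ?mulr1 ?mulr0.
  rewrite ler_nat.
  have -> : (\sum_i \sum_j (e i j : nat))%N
            = #|[set ij : 'I_n * 'I_n | e ij.1 ij.2]|.
    rewrite pair_bigA /= -sum1_card [RHS]big_mkcond /=.
    by apply: eq_bigr => ij _; rewrite inE; case: (e _ _).
  case: (posnP n) => [n0|npos].
    by have -> : (2 * (n - 1) = 0)%N by rewrite n0.
  exact: (@edges_bound n e (Ordinal npos) esym conn).
set Sp := \sum_(x <- s | 0 < x) x.
set Sn := \sum_(x <- s | x < 0) `|x|.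
have eS : Sp = Sn.
  have := @split_sum R s id (erefl _); rewrite h1 /= -/Sp => E.
  have -> : Sn = - \sum_(x <- s | x < 0) x.
    rewrite /Sn -sumrN; apply: eq_bigr => x xn; by rewrite ltr0_norm.
  lra.
have Sp0 : 0 <= Sp by apply: sumr_ge0 => x /ltW.
have Sn0 : 0 <= Sn by apply: sumr_ge0 => x _.
have hsq : \sum_(x <- s) x ^+ 2 <= Sp ^+ 2 + Sn ^+ 2.
  rewrite (@split_sum R s (fun x => x ^+ 2)) ?expr0n //.
  apply: lerD.
    exact: (@sumsq_le R s (fun x => 0 < x) id (fun x h => ltW h)).
  have -> : \sum_(x <- s | x < 0) x ^+ 2 = \sum_(x <- s | x < 0) `|x| ^+ 2.
    by apply: eq_bigr => x xn; rewrite ltr0_norm // sqrrN.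
  exact: (@sumsq_le R s (fun x => x < 0) (fun x => `|x|) (fun x _ => normr_ge0 x)).
have hN : ((n - 1)%N%:R : R) <= Sp ^+ 2.
  move: h2; rewrite natrM => h2.
  rewrite -eS in hsq; lra.
have p1' : p <= 1 by exact: ltW.
rewrite le_min; apply/andP; split.
  apply: (@final_step R p _ Sp _ p0 (ler0n _ _) hN Sp0).
  exact: (@sum_powR R s (fun x => 0 < x) id p p0 p1' (fun x h => ltW h)).
apply: (@final_step R p _ Sn _ p0 (ler0n _ _) _ Sn0).
  by rewrite -eS.
exact: (@sum_powR R s (fun x => x < 0) (fun x => `|x|) p p0 p1' (fun x _ => normr_ge0 x)).
Qed.
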